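(* For all integers $m,n\ge1$, $$S_{m,n}(q)=\sum_{r=0}^{\lfloor m/2\rfloor}(-1)^r\left[\binom{m-1}{r}-\binom{m-1}{r-2}\right]\frac{(1-q^{(\frac{m+1}{2}-r)n})(1+(-1)^mq^{(\frac{m+1}{2}-r)(n+1)})q^{rn}}{(1-q^2)(1-q)^{m-1}(1-q^{\frac{m+1}{2}-r})}.$$
   Context: $q$ is an indeterminate and $q^{1/2}$ a fixed formal square root of $q$; identities are identities of rational functions in $q^{1/2}$. For integers $m,n\ge1$, $$S_{m,n}(q)=\sum_{k=1}^{n}\frac{1-q^{2k}}{1-q^2}\left(\frac{1-q^k}{1-q}\right)^{m-1}q^{\frac{m+1}{2}(n-k)}.$$ Binomial coefficients $\binom{a}{b}$ with integers $a,b$ are taken to be $0$ when $b<0$ or when $0\le a<b$. *)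

(* Defs.v *)
From mathcomp Require Import all_boot all_order all_algebra fraction.
Set Implicit Arguments. Unset Strict Implicit. Unset Printing Implicit Defensive.
Import GRing.Theory.
Local Open Scope ring_scope.

Definition RF : fieldType := {fraction {poly rat}}.
(* t stands for q^{1/2}; so q^{a/2} is written t ^+ a. *)
Definition t : RF := @FracField.tofrac {poly rat} 'X.

(* S_{m,n}(q) = sum_{k=1}^n (1-q^{2k})/(1-q^2) ((1-q^k)/(1-q))^{m-1} q^{(m+1)(n-k)/2} *)
Definition Smn (m n : nat) : RF :=
  \sum_(1 <= k < n.+1)
     ((1 - t ^+ (4 * k)) / (1 - t ^+ 4)) *
     ((1 - t ^+ (2 * k)) / (1 - t ^+ 2)) ^+ (m - 1) *
     t ^+ ((m + 1) * (n - k)).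

Definition binz (a : nat) (b : int) : RF :=
  match b with Posz b' => ('C(a, b'))%:R | Negz _ => 0 end.

(* right-hand side; (m+1)/2 - r = (m+1-2r)/2, so q^{((m+1)/2 - r) x} = t^{(m+1-2r) x} *)
Definition RHSmn (m n : nat) : RF :=
  \sum_(0 <= r < (m./2).+1)
    (-1) ^+ r * (binz (m - 1) r%:Z - binz (m - 1) (r%:Z - 2)) *
    ((1 - t ^+ ((m + 1 - 2 * r) * n)) *
     (1 + (-1) ^+ m * t ^+ ((m + 1 - 2 * r) * (n + 1))) *
     t ^+ (2 * (r * n)))
    / ((1 - t ^+ 4) * (1 - t ^+ 2) ^+ (m - 1) * (1 - t ^+ (m + 1 - 2 * r))).

(* Main.v *)
Require Import Defs.
From mathcomp Require Import all_boot all_order all_algebra fraction.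
From mathcomp Require Import ring zify.
Set Implicit Arguments. Unset Strict Implicit. Unset Printing Implicit Defensive.
Import GRing.Theory.
Local Open Scope ring_scope.

Definition cc (F : fieldType) n j : F :=
  'C(n,j)%:R - (if (2 <= j)%N then 'C(n,j-2)%:R else 0).

Lemma csym (F : fieldType) n j : (j <= n.+2)%N -> cc F n (n.+2 - j) = - cc F n j.
Proof.
move=> hj; rewrite /cc.
case: (leqP 2 j) => hj2; case: (leqP j n) => hjn.
- rewrite (_ : (2 <= n.+2 - j)%N = true); last by lia.
  rewrite (_ : (n.+2 - j = n - (j - 2))%N); last by lia.
  rewrite bin_sub; last by lia.
  rewrite (_ : (n - (j - 2) - 2 = n - j)%N); last by lia.
  rewrite bin_sub //; ring.
- rewrite (_ : (2 <= n.+2 - j)%N = false); last by lia.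
  rewrite (_ : (n.+2 - j = n - (j - 2))%N); last by lia.
  rewrite bin_sub; last by lia.
  rewrite (bin_small hjn); ring.
- rewrite (_ : (2 <= n.+2 - j)%N = true); last by lia.
  rewrite (_ : (n.+2 - j - 2 = n - j)%N); last by lia.
  rewrite bin_sub // bin_small; last by lia.
  ring.
- rewrite (_ : (2 <= n.+2 - j)%N = false); last by lia.
  rewrite !bin_small; try lia. by rewrite subrr oppr0.
Qed.

Lemma binexp (F : fieldType) (y : F) n :
  (1 - y) ^+ n = \sum_(0 <= j < n.+1) (-1) ^+ j * 'C(n, j)%:R * y ^+ j.
Proof.
rewrite exprDn big_mkord; apply: eq_bigr => i _.
rewrite expr1n mul1r -mulr_natr -[in LHS]mulN1r exprMn; ring.
Qed.

Lemma expand (F : fieldType) (y : F) n :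
  (1 - y ^+ 2) * (1 - y) ^+ n = \sum_(0 <= j < n.+3) (-1) ^+ j * cc F n j * y ^+ j.
Proof.
rewrite /cc.
rewrite (eq_bigr (fun j => (-1) ^+ j * 'C(n, j)%:R * y ^+ j -
   (-1) ^+ j * (if (2 <= j)%N then 'C(n, j - 2)%:R else 0) * y ^+ j)); last first.
  by move=> j _; ring.
rewrite sumrB mulrBl mul1r binexp.
congr (_ - _).
  rewrite [RHS](big_cat_nat _ (n:=n.+1)) //=; last by lia.
  rewrite (_ : \sum_(n.+1 <= i < n.+3) (-1) ^+ i * 'C(n, i)%:R * y ^+ i = 0) ?addr0 //.
  rewrite big_nat_cond big1 //.
  move=> j /andP[/andP[hj _] _]; rewrite bin_small // mulr0 mul0r //.
rewrite [RHS](big_cat_nat _ (n:=2)) //=.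
rewrite (_ : \sum_(0 <= i < 2) (-1) ^+ i * (if (1 < i)%N then 'C(n, i - 2)%:R else 0) * y ^+ i = 0 :> F) ?add0r; last first.
  rewrite big_nat_cond big1 //.
  move=> j /andP[/andP[_ hj] _]; rewrite (_ : (1 < j)%N = false) ?mulr0 ?mul0r //; lia.
rewrite (big_addn 0 _ 2) big_distrr /=.
rewrite (_ : (n.+3 - 2 = n.+1)%N); last by lia.
apply: eq_big_nat => j _.
rewrite (_ : (1 < j + 2)%N = true); last by lia.
rewrite addnK !exprD; rewrite (_ : (-1) ^+ 2 = 1 :> F); last by rewrite expr2 mulrNN mulr1. ring.
Qed.

Lemma sgn2 (F : fieldType) j : (-1) ^+ j * (-1) ^+ j = 1 :> F.
Proof. by rewrite -exprD addnn -mul2n exprM expr2 mulrNN mulr1 expr1n. Qed.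

Lemma cmid (F : fieldType) p : cc F p.*2 p.+1 = 0.
Proof.
rewrite /cc; case: p => [|p]; first by rewrite bin_small // subrr.
rewrite (_ : (2 <= p.+2)%N = true) //.
rewrite (_ : (p.+2 = p.+1.*2 - (p.+2 - 2))%N); last by lia.
rewrite bin_sub; last by lia.
by rewrite (_ : (p.+1.*2 - (p.+2 - 2) - 2 = p.+2 - 2)%N) ?subrr //; lia.
Qed.

Lemma refl (F : fieldType) (y : F) m : (0 < m)%N ->
  \sum_(0 <= j < m.+2) (-1) ^+ j * cc F (m-1) j * y ^+ j =
  \sum_(0 <= r < (m./2).+1) (-1) ^+ r * cc F (m-1) r * (y ^+ r + (-1) ^+ m * y ^+ (m.+1 - r)).
Proof.
move=> hm.
have hsym : forall j, (j <= m.+1)%N ->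
    (-1) ^+ (m.+1 - j) * cc F (m-1) (m.+1 - j) = (-1) ^+ m * ((-1) ^+ j * cc F (m-1) j).
  move=> j hj.
  have e : (m.+1 = (m-1).+2)%N by lia.
  rewrite [in cc _ _ (m.+1 - j)]e csym; last by lia.
  have -> : (-1) ^+ (m.+1 - j) = (-1) ^+ m.+1 * (-1) ^+ j :> F.
    have E : (-1) ^+ (m.+1 - j) * (-1) ^+ j = (-1) ^+ m.+1 :> F by rewrite -exprD subnK.
    by rewrite -E -mulrA sgn2 mulr1.
  rewrite exprS; ring.
rewrite (big_cat_nat _ (n:=(m./2).+1)) //=; last by lia.
rewrite [RHS](eq_big_nat _ _ (F2 := fun r => (-1) ^+ r * cc F (m-1) r * y ^+ r +
      (-1) ^+ (m.+1 - r) * cc F (m-1) (m.+1 - r) * y ^+ (m.+1 - r))); last first.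
  move=> r /andP[_ hr]; rewrite hsym; last by lia.
  ring.
rewrite big_split /=; congr (_ + _).
rewrite big_nat_rev /= (big_addn 0 _ (m./2).+1).
rewrite (eq_big_nat _ _ (F2 := fun i => (-1) ^+ (m.+1 - i) * cc F (m-1) (m.+1 - i) * y ^+ (m.+1 - i))); last first.
  move=> i /andP[_ hi].
  by rewrite (_ : ((m./2).+1 + m.+2 - (i + (m./2).+1).+1 = m.+1 - i)%N) //; lia.
have hoh := odd_double_half m.
case ho: (odd m) hoh => /= hoh.
- rewrite (_ : (m.+2 - (m./2).+1 = (m./2).+2)%N); last by lia.
  rewrite big_nat_recr //= (_ : (m.+1 - (m./2).+1 = (m./2).+1)%N); last by lia.
  rewrite (_ : (m - 1 = (m./2).*2)%N); last by lia.
  by rewrite cmid mulr0 mul0r addr0.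
- by rewrite (_ : (m.+2 - (m./2).+1 = (m./2).+1)%N); last by lia.
Qed.

Definition bzF (F : fieldType) (a : nat) (b : int) : F :=
  match b with Posz b' => ('C(a, b'))%:R | Negz _ => 0 end.

Lemma bz_cc (F : fieldType) n r : bzF F n r%:Z - bzF F n (r%:Z - 2) = cc F n r.
Proof.
by rewrite /cc; case: r => [|[|r]] //=.
Qed.

Lemma geo0 (F : fieldType) (a b : F) n : (a - b) * \sum_(1 <= k < n.+1) a ^+ k * b ^+ (n - k) = a * (a ^+ n - b ^+ n).
Proof.
elim: n => [|n IH]; first by rewrite big_geq // mulr0 expr0 subrr mulr0.
rewrite big_nat_recr //= subnn expr0 mulr1.
have -> : \sum_(1 <= k < n.+1) a ^+ k * b ^+ (n.+1 - k) = b * \sum_(1 <= k < n.+1) a ^+ k * b ^+ (n - k).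
  rewrite big_distrr; apply: eq_big_nat => k /andP[_ hk].
  by rewrite subSn // exprS mulrCA.
rewrite mulrDr mulrCA IH !exprS; ring.
Qed.

Lemma geo (F : fieldType) (u w s : F) n : u != 0 -> w != 0 -> w != 1 ->
  \sum_(1 <= k < n.+1) (u ^+ k + s * (u*w*w) ^+ k) * (u*w) ^+ (n - k)
  = u ^+ n * (1 - w ^+ n) * (1 + s * w ^+ (n + 1)) / (1 - w).
Proof.
move=> hu hw0 hw.
rewrite (eq_bigr (fun k => u^+k*(u*w)^+(n-k) + s*((u*w*w)^+k*(u*w)^+(n-k)))); last by move=> k _; ring.
rewrite big_split /= -big_distrr /=.
have hw' : 1 - w != 0 by rewrite subr_eq0 eq_sym.
have nz1 : u - u * w != 0 by rewrite -{1}(mulr1 u) -mulrBr mulf_neq0.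
have nz2 : u * w * w - u * w != 0 by rewrite -{2}(mulr1 (u*w)) -mulrBr; apply: mulf_neq0; [apply: mulf_neq0 | rewrite subr_eq0]...
rewrite -[X in X + _](mulKf nz1) (geo0 u (u*w) n) -[X in _ + s * X = _](mulKf nz2) (geo0 (u*w*w) (u*w) n).
rewrite !exprMn addn1 exprS.
field.
by rewrite hw' nz1 nz2.
Qed.

Definition SmnF (F : fieldType) (x : F) (m n : nat) : F :=
  \sum_(1 <= k < n.+1)
     ((1 - x ^+ (4 * k)) / (1 - x ^+ 4)) *
     ((1 - x ^+ (2 * k)) / (1 - x ^+ 2)) ^+ (m - 1) *
     x ^+ ((m + 1) * (n - k)).

Definition RHSF (F : fieldType) (x : F) (m n : nat) : F :=
  \sum_(0 <= r < (m./2).+1)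
    (-1) ^+ r * (bzF F (m - 1) r%:Z - bzF F (m - 1) (r%:Z - 2)) *
    ((1 - x ^+ ((m + 1 - 2 * r) * n)) *
     (1 + (-1) ^+ m * x ^+ ((m + 1 - 2 * r) * (n + 1))) *
     x ^+ (2 * (r * n)))
    / ((1 - x ^+ 4) * (1 - x ^+ 2) ^+ (m - 1) * (1 - x ^+ (m + 1 - 2 * r))).

Lemma mainF (F : fieldType) (x : F) m n : (0 < m)%N -> x != 0 ->
  (forall d, (0 < d)%N -> x ^+ d != 1) -> SmnF x m n = RHSF x m n.
Proof.
move=> hm hx hd.
have n4 : 1 - x ^+ 4 != 0 by rewrite subr_eq0 eq_sym hd.
have n2 : 1 - x ^+ 2 != 0 by rewrite subr_eq0 eq_sym hd.
have n2e : (1 - x ^+ 2) ^+ (m - 1) != 0 by rewrite expf_neq0.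
rewrite /SmnF /RHSF.
transitivity (((1 - x ^+ 4) * (1 - x ^+ 2) ^+ (m - 1))^-1 *
  \sum_(1 <= k < n.+1) ((1 - ((x ^+ 2) ^+ k) ^+ 2) * (1 - (x ^+ 2) ^+ k) ^+ (m - 1)) *
     (x ^+ (m + 1)) ^+ (n - k)).
  rewrite big_distrr; apply: eq_big_nat => k _ /=.
  rewrite (_ : (4 * k = 2 * k * 2)%N); last by lia.
  rewrite !exprM.
  rewrite expr_div_n; field.
  by rewrite n4 n2e.
rewrite (eq_bigr (fun k => \sum_(0 <= r < (m./2).+1) (-1) ^+ r * cc F (m-1) r *
   ((((x ^+ 2) ^+ r) ^+ k + (-1) ^+ m * ((x ^+ 2) ^+ (m.+1 - r)) ^+ k) * (x ^+ (m + 1)) ^+ (n - k)))); last first.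
  move=> k _.
  rewrite expand (_ : ((m - 1).+3 = m.+2)%N); last by lia.
  rewrite refl // big_distrl; apply: eq_bigr => r _.
  by rewrite (exprAC (x ^+ 2) k r) (exprAC (x ^+ 2) k (m.+1 - r)) [RHS]mulrA.
rewrite exchange_big_nat big_distrr /=; apply: eq_big_nat => r /andP[_ hr].
set d := (m + 1 - 2 * r)%N.
have hd0 : (0 < d)%N by rewrite /d; lia.
have eu : (x ^+ 2) ^+ r = x ^+ (2 * r) by rewrite exprM.
have euww : (x ^+ 2) ^+ (m.+1 - r) = x ^+ (2 * r) * x ^+ d * x ^+ d.
  by rewrite -!exprD -exprM /d; congr (_ ^+ _); lia.
have euw : x ^+ (m + 1) = x ^+ (2 * r) * x ^+ d.
  by rewrite -!exprD /d; congr (_ ^+ _); lia.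
rewrite eu euww euw -big_distrr /= geo; last first.
- by apply: hd.
- by rewrite expf_neq0.
- by rewrite expf_neq0.
rewrite bz_cc mulnA (exprM x (2 * r) n) (exprM x d n) (exprM x d (n + 1)).
have nd : 1 - x ^+ d != 0 by rewrite subr_eq0 eq_sym hd.
field.
by rewrite n4 n2e nd.
Qed.

Lemma tX_neq1 d : (0 < d)%N -> t ^+ d != 1.
Proof.
move=> hd; rewrite /t -tofracXn -tofrac1 tofrac_eq.
apply/eqP => h; have := congr1 (fun p : {poly rat} => size p) h; rewrite /= size_polyXn size_poly1.
by move=> [] hd0; rewrite hd0 in hd.
Qed.

Lemma t_neq0 : t != 0.
Proof. by rewrite /t tofrac_eq0 polyX_eq0. Qed.

Theorem lemma2p1 (m n : nat) : (1 <= m)%N -> (1 <= n)%N -> Smn m n = RHSmn m n.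
Proof.
move=> hm _.
exact: (@mainF RF t m n hm t_neq0 tX_neq1).
Qed.
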